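(* Let $c,d>0$ with $\frac1c+\frac1d\ge1$ and $g(x)=xF(c,d;c+d;x)$ for $x\in(0,1)$. Then for all $x>0$ and $p,q\in\mathbb{R}$, $$g\!\left(\frac{x^p}{1+x^p}\right)g\!\left(\frac{x^q}{1+x^q}\right)\le g^2\!\left(\frac{x^{(p+q)/2}}{1+x^{(p+q)/2}}\right).$$
   Context: $F(a,b;c;x)$ is the Gaussian hypergeometric function $\sum_{n\ge0}\frac{(a)_n(b)_n}{(c)_n}\frac{x^n}{n!}$ ($|x|<1$), with $(a)_n=a(a+1)\cdots(a+n-1)$, $(a)_0=1$. $g^2(y)=(g(y))^2$. *)

(* Defs.v *)
From Stdlib Require Import Reals Lra ClassicalEpsilon.
Open Scope R_scope.

Fixpoint poch (a : R) (n : nat) : R :=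
  match n with
  | O => 1
  | S k => poch a k * (a + INR k)
  end.

Definition hyp_term (a b c x : R) (n : nat) : R :=
  poch a n * poch b n / poch c n * x ^ n / INR (Factorial.fact n).

(* F(a,b;c;x) := sum of the series (chosen by Hilbert epsilon; it is the
   genuine sum whenever the series converges, e.g. for |x| < 1, c > 0). *)
Definition hypF (a b c x : R) : R :=
  epsilon (inhabits 0) (fun l => infinite_sum (hyp_term a b c x) l).

Definition g (c d x : R) : R := x * hypF c d (c + d) x.

(* Main.v *)
Require Import Defs.
From Stdlib Require Import Reals Lra Lia Arith ClassicalEpsilon.
Open Scope R_scope.

Fixpoint ssum (f : nat -> R) (n : nat) : R :=
  match n with O => 0 | S k => ssum f k + f k end.

Lemma ssum_sum_f (f : nat -> R) n : ssum f (S n) = sum_f_R0 f n.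
Proof. induction n; simpl in *; [ring|]. rewrite <- IHn. simpl. ring. Qed.

Lemma ssum_ext f g n : (forall k, (k < n)%nat -> f k = g k) -> ssum f n = ssum g n.
Proof. induction n; intros H; simpl; [reflexivity|].
  rewrite IHn by (intros; apply H; lia). rewrite (H n) by lia. reflexivity. Qed.

Lemma ssum_nonneg f n : (forall k, (k < n)%nat -> 0 <= f k) -> 0 <= ssum f n.
Proof. induction n; intros H; simpl; [lra|].
  assert (0 <= ssum f n) by (apply IHn; intros; apply H; lia).
  assert (0 <= f n) by (apply H; lia). lra. Qed.

Lemma ssum_le f g n : (forall k, (k < n)%nat -> f k <= g k) -> ssum f n <= ssum g n.
Proof. induction n; intros H; simpl; [lra|].
  assert (ssum f n <= ssum g n) by (apply IHn; intros; apply H; lia).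
  assert (f n <= g n) by (apply H; lia). lra. Qed.

Lemma ssum_pos f n : (forall k, (k < S n)%nat -> 0 < f k) -> 0 < ssum f (S n).
Proof. intros H. simpl. assert (0 <= ssum f n) by (apply ssum_nonneg; intros; apply Rlt_le, H; lia).
  assert (0 < f n) by (apply H; lia). lra. Qed.

Lemma ssum_scal a f n : a * ssum f n = ssum (fun k => a * f k) n.
Proof. induction n; simpl; [ring|]. rewrite <- IHn. ring. Qed.

Lemma ssum_plus f g n : ssum f n + ssum g n = ssum (fun k => f k + g k) n.
Proof. induction n; simpl; [ring|]. rewrite <- IHn. ring. Qed.

Lemma ssum_minus f g n : ssum f n - ssum g n = ssum (fun k => f k - g k) n.
Proof. induction n; simpl; [ring|]. rewrite <- IHn. ring. Qed.

Lemma ssum_prod f g n : ssum f n * ssum g n = ssum (fun i => ssum (fun j => f i * g j) n) n.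
Proof. rewrite Rmult_comm, ssum_scal.
  apply ssum_ext. intros k _. rewrite Rmult_comm, ssum_scal. reflexivity. Qed.

Lemma poch_pos a n : 0 < a -> 0 < poch a n.
Proof. intros Ha. induction n; simpl; [lra|]. apply Rmult_lt_0_compat; [assumption|].
  pose proof (pos_INR n). lra. Qed.

Definition A (c d : R) (n : nat) : R :=
  poch c n * poch d n / poch (c + d) n / INR (Factorial.fact n).

Lemma A_pos c d n : 0 < c -> 0 < d -> 0 < A c d n.
Proof. intros. unfold A. pose proof (poch_pos c n H). pose proof (poch_pos d n H0).
  pose proof (poch_pos (c+d) n ltac:(lra)). pose proof (INR_fact_lt_0 n).
  unfold Rdiv. repeat apply Rmult_lt_0_compat; try assumption; apply Rinv_0_lt_compat; assumption. Qed.

Lemma A_S c d n : 0 < c -> 0 < d ->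
  A c d (S n) = A c d n * ((c + INR n) * (d + INR n) / ((c + d + INR n) * (INR n + 1))).
Proof. intros. unfold A. simpl poch. change (Factorial.fact (S n)) with (S n * Factorial.fact n)%nat.
  rewrite mult_INR, S_INR.
  pose proof (poch_pos c n H). pose proof (poch_pos d n H0).
  pose proof (poch_pos (c+d) n ltac:(lra)). pose proof (INR_fact_lt_0 n). pose proof (pos_INR n).
  field. repeat split; lra. Qed.

Lemma A_0 c d : A c d 0 = 1.
Proof. unfold A; simpl. field. Qed.

Definition pp (c d : R) (n : nat) : R := INR (S n) * A c d (S n) - INR n * A c d n.

Lemma pp_eq c d n : 0 < c -> 0 < d -> pp c d n = A c d n * (c * d / (c + d + INR n)).
Proof. intros. unfold pp. rewrite A_S by assumption. rewrite S_INR. pose proof (pos_INR n).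
  field. lra. Qed.

Lemma A_le_1 c d n : 0 < c -> 0 < d -> c * d <= c + d -> A c d n <= 1.
Proof. intros. induction n. rewrite A_0; lra.
  rewrite A_S by assumption. pose proof (pos_INR n). pose proof (A_pos c d n H H0).
  assert ((c + INR n) * (d + INR n) / ((c + d + INR n) * (INR n + 1)) <= 1).
  { apply Rmult_le_reg_r with ((c + d + INR n) * (INR n + 1)). nra.
    field_simplify; nra. }
  assert (0 <= (c + INR n) * (d + INR n) / ((c + d + INR n) * (INR n + 1))).
  { apply Rle_mult_inv_pos; nra. }
  nra. Qed.

Lemma pow_cross s1 s2 n m : 0 <= s1 <= s2 -> (n <= m)%nat -> s2^n * s1^m <= s1^n * s2^m.
Proof. intros Hs Hnm. replace m with (n + (m - n))%nat by lia. rewrite !pow_add.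
  assert (0 <= s1^n) by (apply pow_le; lra). assert (0 <= s2^n) by (apply pow_le; lra).
  assert (s1^(m-n) <= s2^(m-n)) by (apply pow_incr; lra).
  assert (0 <= s1^n * s2^n) by nra. nra. Qed.

Lemma ssum_nonpos f n : (forall k, (k < n)%nat -> f k <= 0) -> ssum f n <= 0.
Proof. intros H. assert (0 <= ssum (fun k => - f k) n) by (apply ssum_nonneg; intros; specialize (H k H0); lra).
  rewrite <- (Rmult_1_l (ssum _ n)) in H0. 
  replace (ssum (fun k => - f k) n) with (-1 * ssum f n) in H0. lra.
  rewrite ssum_scal. apply ssum_ext. intros; ring. Qed.

Lemma ratio_lemma (q a : nat -> R) L s1 s2 : 0 <= s1 <= s2 ->
  (forall k, (k < L)%nat -> 0 <= a k) ->
  (forall n m, (n <= m)%nat -> (m < L)%nat -> q m * a n <= q n * a m) ->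
  ssum (fun n => q n * s2^n) L * ssum (fun n => a n * s1^n) L <=
  ssum (fun n => q n * s1^n) L * ssum (fun n => a n * s2^n) L.
Proof. intros Hs Ha Hq.
  set (U := fun i j => (q i * a j - q j * a i) * (s2^i * s1^j - s1^i * s2^j)).
  assert (HU : ssum (fun i => ssum (fun j => U i j) L) L <= 0).
  { apply ssum_nonpos. intros i Hi. apply ssum_nonpos. intros j Hj. unfold U.
    destruct (le_lt_dec i j) as [Hij|Hij].
    - pose proof (Hq i j Hij Hj). pose proof (pow_cross s1 s2 i j Hs Hij). nra.
    - pose proof (Hq j i ltac:(lia) Hi). pose proof (pow_cross s1 s2 j i Hs ltac:(lia)). nra. }
  assert (E : ssum (fun i => ssum (fun j => U i j) L) L =
    2 * (ssum (fun n => q n * s2^n) L * ssum (fun n => a n * s1^n) L -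
    ssum (fun n => q n * s1^n) L * ssum (fun n => a n * s2^n) L)).
  { replace (2 * (ssum (fun n => q n * s2^n) L * ssum (fun n => a n * s1^n) L -
    ssum (fun n => q n * s1^n) L * ssum (fun n => a n * s2^n) L)) with
    ((ssum (fun n => q n * s2^n) L * ssum (fun n => a n * s1^n) L -
    ssum (fun n => q n * s1^n) L * ssum (fun n => a n * s2^n) L) +
    (ssum (fun n => a n * s1^n) L * ssum (fun n => q n * s2^n) L -
    ssum (fun n => a n * s2^n) L * ssum (fun n => q n * s1^n) L)) by ring.
    rewrite !ssum_prod, !ssum_minus, ssum_plus. apply ssum_ext. intros i _.
    rewrite !ssum_minus, ssum_plus. apply ssum_ext. intros j _. unfold U. ring. }
  lra. Qed.

Lemma deriv_poly (a : nat -> R) L s :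
  derivable_pt_lim (fun s => ssum (fun n => a n * s^n) L) s
    (ssum (fun n => a n * (INR n * s^(pred n))) L).
Proof. induction L; simpl.
  - apply (derivable_pt_lim_const 0 s).
  - apply (derivable_pt_lim_plus (fun s => ssum (fun n => a n * s^n) L) (fun s => a L * s^L)).
    + exact IHL.
    + apply (derivable_pt_lim_scal (fun s => s^L)). apply derivable_pt_lim_pow.
Qed.

Definition Fm c d M s := ssum (fun n => A c d n * s^n) (S M).
Definition Dm c d M s := ssum (fun n => A c d n * (INR n * s^(pred n))) (S M).
Definition Qm c d M s := ssum (fun n => pp c d n * s^n) M - INR M * A c d M * s^M.
Definition qq c d M n := if Nat.ltb n M then pp c d n else - (INR M * A c d M).

Lemma Dm_Qm c d M s : (1 - s) * Dm c d M s = Qm c d M s.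
Proof. unfold Dm, Qm. induction M.
  - simpl. ring.
  - change (ssum (fun n => A c d n * (INR n * s ^ Init.Nat.pred n)) (S (S M))) with
      (ssum (fun n => A c d n * (INR n * s ^ Init.Nat.pred n)) (S M) + A c d (S M) * (INR (S M) * s^M)).
    rewrite Rmult_plus_distr_l, IHM. simpl ssum. unfold pp. rewrite (S_INR M). simpl pow. ring.
Qed.

Lemma Qm_qq c d M s : Qm c d M s = ssum (fun n => qq c d M n * s^n) (S M).
Proof. unfold Qm. simpl ssum. unfold qq at 2. rewrite Nat.ltb_irrefl.
  rewrite (ssum_ext (fun n => qq c d M n * s^n) (fun n => pp c d n * s^n)). ring.
  intros k Hk. unfold qq. apply Nat.ltb_lt in Hk. rewrite Hk. reflexivity. Qed.

Lemma Fm_pos c d M s : 0 < c -> 0 < d -> 0 < s -> 0 < Fm c d M s.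
Proof. intros. unfold Fm. apply ssum_pos. intros. apply Rmult_lt_0_compat. apply A_pos; auto.
  apply pow_lt; auto. Qed.

Definition T c d M s := 1 - s + s * (Qm c d M s / Fm c d M s).

Lemma T_decr c d M s1 s2 : 0 < c -> 0 < d -> c * d <= c + d -> 0 < s1 <= s2 ->
  T c d M s2 <= T c d M s1.
Proof. intros Hc Hd Hcd Hs.
  assert (Hw : forall n m, (n <= m)%nat -> c * d / (c + d + INR m) <= c * d / (c + d + INR n)).
  { intros n m Hnm. apply le_INR in Hnm. pose proof (pos_INR n).
    unfold Rdiv. apply Rmult_le_compat_l. nra. apply Rinv_le_contravar; lra. }
  assert (Hw1 : forall n, c * d / (c + d + INR n) <= 1).
  { intros n. pose proof (pos_INR n). apply Rmult_le_reg_r with (c + d + INR n). lra.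
    unfold Rdiv. rewrite Rmult_assoc, Rinv_l by lra. lra. }
  assert (Hw0 : forall n, 0 <= c * d / (c + d + INR n)).
  { intros n. pose proof (pos_INR n). apply Rle_mult_inv_pos; nra. }
  assert (Hrat := ratio_lemma (qq c d M) (A c d) (S M) s1 s2 ltac:(lra)
    (fun k _ => Rlt_le _ _ (A_pos c d k Hc Hd))).
  assert (Hq : forall n m, (n <= m)%nat -> (m < S M)%nat ->
     qq c d M m * A c d n <= qq c d M n * A c d m).
  { intros n m Hnm HmM. unfold qq.
    pose proof (A_pos c d n Hc Hd). pose proof (A_pos c d m Hc Hd). pose proof (pos_INR M).
    destruct (Nat.ltb m M) eqn:E1; destruct (Nat.ltb n M) eqn:E2.
    - rewrite !pp_eq by auto. pose proof (Hw n m Hnm).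
      assert (0 < A c d m * A c d n) by nra.
      replace (A c d m * (c * d / (c + d + INR m)) * A c d n) with ((A c d m * A c d n) * (c * d / (c + d + INR m))) by ring.
      replace (A c d n * (c * d / (c + d + INR n)) * A c d m) with ((A c d m * A c d n) * (c * d / (c + d + INR n))) by ring.
      apply Rmult_le_compat_l; lra.
    - apply Nat.ltb_lt in E1. apply Nat.ltb_ge in E2. lia.
    - rewrite pp_eq by auto. pose proof (Hw0 n). pose proof (A_pos c d M Hc Hd).
      assert (0 <= INR M * A c d M * A c d n) by (apply Rmult_le_pos; nra).
      assert (0 <= A c d n * (c * d / (c + d + INR n)) * A c d m) by (apply Rmult_le_pos; [apply Rmult_le_pos|]; lra).
      lra.
    - apply Nat.ltb_ge in E1. apply Nat.ltb_ge in E2. assert (n = m) by lia. subst. lra. }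
  specialize (Hrat Hq). rewrite <- !Qm_qq in Hrat. fold (Fm c d M s1) (Fm c d M s2) in Hrat.
  assert (HQF : Qm c d M s1 <= Fm c d M s1).
  { rewrite Qm_qq. unfold Fm. apply ssum_le. intros k Hk. apply Rmult_le_compat_r.
    apply pow_le; lra. unfold qq. pose proof (A_pos c d k Hc Hd).
    destruct (Nat.ltb k M) eqn:E. rewrite pp_eq by auto. pose proof (Hw1 k). pose proof (Hw0 k). nra.
    assert (k = M) by (apply Nat.ltb_ge in E; lia). subst. pose proof (pos_INR M). nra. }
  pose proof (Fm_pos c d M s1 Hc Hd ltac:(lra)). pose proof (Fm_pos c d M s2 Hc Hd ltac:(lra)).
  set (R1 := Qm c d M s1 / Fm c d M s1). set (R2 := Qm c d M s2 / Fm c d M s2).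
  assert (R2 <= R1).
  { unfold R1, R2. apply Rmult_le_reg_r with (Fm c d M s1 * Fm c d M s2). nra.
    replace (Qm c d M s2 / Fm c d M s2 * (Fm c d M s1 * Fm c d M s2)) with (Qm c d M s2 * Fm c d M s1) by (field; lra).
    replace (Qm c d M s1 / Fm c d M s1 * (Fm c d M s1 * Fm c d M s2)) with (Qm c d M s1 * Fm c d M s2) by (field; lra).
    lra. }
  assert (R1 <= 1).
  { unfold R1. apply Rmult_le_reg_r with (Fm c d M s1). lra.
    replace (Qm c d M s1 / Fm c d M s1 * Fm c d M s1) with (Qm c d M s1) by (field; lra). lra. }
  unfold T. fold R1 R2. nra.
Qed.

Definition sig u := exp u / (1 + exp u).

Lemma sig_bounds u : 0 < sig u < 1.
Proof. unfold sig. pose proof (exp_pos u). split.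
  apply Rdiv_lt_0_compat; lra.
  apply Rmult_lt_reg_r with (1 + exp u). lra. unfold Rdiv. rewrite Rmult_assoc, Rinv_l by lra. lra. Qed.

Lemma exp_le_mono x y : x <= y -> exp x <= exp y.
Proof. intros [H|H]. apply Rlt_le, exp_increasing, H. subst; lra. Qed.

Lemma sig_incr u1 u2 : u1 <= u2 -> sig u1 <= sig u2.
Proof. intros H. pose proof (exp_le_mono _ _ H). pose proof (exp_pos u1). pose proof (exp_pos u2).
  unfold sig. apply Rmult_le_reg_r with ((1 + exp u1) * (1 + exp u2)). nra.
  replace (exp u1 / (1 + exp u1) * ((1 + exp u1) * (1 + exp u2))) with (exp u1 * (1 + exp u2)) by (field; lra).
  replace (exp u2 / (1 + exp u2) * ((1 + exp u1) * (1 + exp u2))) with (exp u2 * (1 + exp u1)) by (field; lra).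
  nra. Qed.

Lemma dpl_eq f x l l' : derivable_pt_lim f x l -> l = l' -> derivable_pt_lim f x l'.
Proof. intros H ->; exact H. Qed.

Lemma sig_deriv u : derivable_pt_lim sig u (sig u * (1 - sig u)).
Proof. pose proof (exp_pos u).
  assert (H1 : derivable_pt_lim (fun u => 1 + exp u) u (0 + exp u)).
  { apply (derivable_pt_lim_plus (fct_cte 1) exp). apply derivable_pt_lim_const. apply derivable_pt_lim_exp. }
  pose proof (derivable_pt_lim_div exp (fun u => 1 + exp u) u (exp u) (0 + exp u)
     (derivable_pt_lim_exp u) H1 ltac:(lra)) as H2.
  eapply dpl_eq. exact H2. unfold sig. unfold Rsqr. field. lra. Qed.

Definition hM c d M u := ln (sig u * Fm c d M (sig u)).

Lemma hM_deriv c d M u : 0 < c -> 0 < d ->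
  derivable_pt_lim (hM c d M) u (T c d M (sig u)).
Proof. intros Hc Hd. pose proof (sig_bounds u) as Hs.
  set (Psi := fun s => s * Fm c d M s).
  assert (HP : forall s, derivable_pt_lim Psi s (1 * Fm c d M s + s * Dm c d M s)).
  { intros s. apply (derivable_pt_lim_mult id (Fm c d M)). apply derivable_pt_lim_id.
    unfold Fm, Dm. apply deriv_poly. }
  assert (HPs : derivable_pt_lim (comp Psi sig) u ((1 * Fm c d M (sig u) + sig u * Dm c d M (sig u)) * (sig u * (1 - sig u)))).
  { apply derivable_pt_lim_comp. apply sig_deriv. apply HP. }
  pose proof (Fm_pos c d M (sig u) Hc Hd ltac:(lra)).
  assert (Hpos : 0 < comp Psi sig u) by (unfold comp, Psi; apply Rmult_lt_0_compat; lra).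
  pose proof (derivable_pt_lim_comp (comp Psi sig) ln u _ _ HPs (derivable_pt_lim_ln _ Hpos)) as HH.
  eapply dpl_eq. exact HH. unfold comp, Psi, T. rewrite <- Dm_Qm. field. lra. Qed.

Lemma hM_mid c d M a b : 0 < c -> 0 < d -> c * d <= c + d ->
  hM c d M a + hM c d M b <= 2 * hM c d M ((a + b) / 2).
Proof. intros Hc Hd Hcd.
  assert (K : forall a b, a < b -> hM c d M a + hM c d M b <= 2 * hM c d M ((a + b) / 2)).
  { clear a b. intros a b Hab. set (m := (a + b) / 2).
    destruct (MVT_cor2 (hM c d M) (fun u => T c d M (sig u)) a m ltac:(unfold m; lra)
      (fun x _ => hM_deriv c d M x Hc Hd)) as [x1 [E1 I1]].
    destruct (MVT_cor2 (hM c d M) (fun u => T c d M (sig u)) m b ltac:(unfold m; lra)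
      (fun x _ => hM_deriv c d M x Hc Hd)) as [x2 [E2 I2]].
    assert (HT : T c d M (sig x2) <= T c d M (sig x1)).
    { apply T_decr; auto. pose proof (sig_bounds x1). split. lra. apply sig_incr. lra. }
    assert (b - m = m - a) by (unfold m; lra).
    assert (0 < m - a) by (unfold m; lra). nra. }
  destruct (Rtotal_order a b) as [H|[H|H]].
  - apply K; auto.
  - subst. replace ((b + b) / 2) with b by field. lra.
  - rewrite Rplus_comm. replace ((a + b) / 2) with ((b + a) / 2) by field. apply K; auto.
Qed.

Lemma GM_mid c d M a b : 0 < c -> 0 < d -> c * d <= c + d ->
  (sig a * Fm c d M (sig a)) * (sig b * Fm c d M (sig b)) <=
  (sig ((a + b) / 2) * Fm c d M (sig ((a + b) / 2))) ^ 2.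
Proof. intros Hc Hd Hcd.
  assert (P : forall u, 0 < sig u * Fm c d M (sig u)).
  { intros u. pose proof (sig_bounds u). pose proof (Fm_pos c d M (sig u) Hc Hd ltac:(lra)).
    apply Rmult_lt_0_compat; lra. }
  pose proof (hM_mid c d M a b Hc Hd Hcd) as H. unfold hM in H.
  rewrite <- (exp_ln _ (P a)), <- (exp_ln _ (P b)), <- (exp_ln _ (P ((a+b)/2))).
  rewrite <- exp_plus. simpl. rewrite Rmult_1_r, <- exp_plus.
  apply exp_le_mono. lra. Qed.

Lemma hyp_term_eq c d s n : hyp_term c d (c + d) s n = A c d n * s^n.
Proof. unfold hyp_term, A, Rdiv. ring. Qed.

Lemma Fm_conv c d s : 0 < c -> 0 < d -> c * d <= c + d -> 0 < s < 1 ->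
  Un_cv (fun M => Fm c d M s) (hypF c d (c + d) s).
Proof. intros Hc Hd Hcd Hs.
  assert (E : forall M, Fm c d M s = sum_f_R0 (hyp_term c d (c + d) s) M).
  { intros M. unfold Fm. rewrite ssum_sum_f. apply sum_eq. intros; rewrite hyp_term_eq; reflexivity. }
  assert (Hg : Un_growing (fun M => Fm c d M s)).
  { intros n. unfold Fm. change (ssum (fun n0 => A c d n0 * s ^ n0) (S (S n))) with
      (ssum (fun n0 => A c d n0 * s ^ n0) (S n) + A c d (S n) * s^(S n)).
    pose proof (A_pos c d (S n) Hc Hd). pose proof (pow_lt s (S n) ltac:(lra)). nra. }
  assert (Hb : has_ub (fun M => Fm c d M s)).
  { exists (/ (1 - s)). intros y [M ->]. unfold Fm. rewrite ssum_sum_f.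
    apply Rle_trans with (sum_f_R0 (fun i => s ^ i) M).
    - apply sum_Rle. intros n _. pose proof (A_le_1 c d n Hc Hd Hcd). pose proof (A_pos c d n Hc Hd).
      pose proof (pow_lt s n ltac:(lra)). nra.
    - rewrite tech3 by lra. pose proof (pow_lt s (S M) ltac:(lra)).
      apply Rmult_le_reg_r with (1 - s). lra.
      replace ((1 - s ^ S M) / (1 - s) * (1 - s)) with (1 - s^ S M) by (field; lra).
      rewrite Rinv_l by lra. lra. }
  destruct (growing_cv _ Hg Hb) as [l Hl].
  assert (Hex : exists l, infinite_sum (hyp_term c d (c + d) s) l).
  { exists l. intros eps Heps. destruct (Hl eps Heps) as [N HN]. exists N. intros n Hn.
    rewrite <- E. apply HN. exact Hn. }
  pose proof (epsilon_spec (inhabits 0) _ Hex) as HF. fold (hypF c d (c + d) s) in HF.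
  intros eps Heps. destruct (HF eps Heps) as [N HN]. exists N. intros n Hn. rewrite E. apply HN; exact Hn.
Qed.

Lemma cv_const (a : R) : Un_cv (fun _ => a) a.
Proof. intros eps Heps. exists 0%nat. intros. unfold Rdist. rewrite Rminus_diag, Rabs_R0. lra. Qed.

Lemma GG_mid c d a b : 0 < c -> 0 < d -> c * d <= c + d ->
  (sig a * hypF c d (c + d) (sig a)) * (sig b * hypF c d (c + d) (sig b)) <=
  (sig ((a + b) / 2) * hypF c d (c + d) (sig ((a + b) / 2))) ^ 2.
Proof. intros Hc Hd Hcd.
  assert (C : forall u, Un_cv (fun M => sig u * Fm c d M (sig u)) (sig u * hypF c d (c + d) (sig u))).
  { intros u. apply CV_mult. apply cv_const. apply Fm_conv; auto. apply sig_bounds. }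
  simpl. rewrite Rmult_1_r.
  apply Rle_cv_lim with (Un := fun M => (sig a * Fm c d M (sig a)) * (sig b * Fm c d M (sig b)))
     (Vn := fun M => (sig ((a + b) / 2) * Fm c d M (sig ((a + b) / 2))) * (sig ((a + b) / 2) * Fm c d M (sig ((a + b) / 2)))).
  - intros M. pose proof (GM_mid c d M a b Hc Hd Hcd). simpl in H. rewrite Rmult_1_r in H. exact H.
  - apply CV_mult; apply C.
  - apply CV_mult; apply C.
Qed.

Theorem mainTheorem15 (c d : R) (hc : 0 < c) (hd : 0 < d)
  (hcd : / c + / d >= 1) (x p q : R) (hx : 0 < x) :
  g c d (Rpower x p / (1 + Rpower x p)) * g c d (Rpower x q / (1 + Rpower x q))
  <= (g c d (Rpower x ((p + q) / 2) / (1 + Rpower x ((p + q) / 2)))) ^ 2.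
Proof.
  assert (Hcd : c * d <= c + d).
  { assert (c * d * (/ c + / d) = c + d) by (field; lra). assert (0 < c * d) by nra. nra. }
  pose proof (GG_mid c d (p * ln x) (q * ln x) hc hd Hcd) as H.
  unfold g, Rpower. unfold sig in H.
  replace ((p + q) / 2 * ln x) with ((p * ln x + q * ln x) / 2) by field. exact H.
Qed.
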